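(* Let $k$ be a field of characteristic $p>0$, $A=k[x_1,\dots,x_r]/(x_1^p,\dots,x_r^p)$, and $M$ any finitely generated $A$-module. Then the two homomorphisms \[ \Theta^M_{\Delta_{\mathrm{Gr}}},\ \Theta^M_{\Delta_{\mathrm{Lie}}}\colon\operatorname{Ext}^*_A(k,k)\longrightarrow\operatorname{Ext}^*_A(M,M) \] coincide on the subring $S=k[\zeta_1,\dots,\zeta_r]$ of $\operatorname{Ext}^*_A(k,k)$.
   Context: $A$ is the group algebra of the elementary abelian group $E=\langle g_1,\dots,g_r\rangle$ of order $p^r$ with $x_i=g_i-1$. Two Hopf structures: $\Delta_{\mathrm{Gr}}(x_i)=x_i\otimes1+x_i\otimes x_i+1\otimes x_i$ (i.e. $g\mapsto g\otimes g$), antipode $g_i\mapsto g_i^{-1}$; and $\Delta_{\mathrm{Lie}}(x_i)=x_i\otimes1+1\otimes x_i$, antipode $x_i\mapsto-x_i$. For a comultiplication $\Delta$, $\Theta^M_\Delta$ is induced by the exact functor $X\mapsto X\otimes_kM$ with $A$-action $\alpha(x\otimes m)=\sum_{(\alpha)}\alpha_1x\otimes\alpha_2m$ (where $\Delta(\alpha)=\sum\alpha_1\otimes\alpha_2$): it sends the Yoneda class of an exact sequence $0\to k\to E_n\to\cdots\to E_1\to k\to0$ to the class of $0\to M\to E_n\otimes_kM\to\cdots\to E_1\otimes_kM\to M\to0$. The classes $\zeta_i\in\operatorname{Ext}^2_A(k,k)$: with $P^{(i)}_*$ the resolution $\cdots\to A_i\xrightarrow{x_i}A_i\xrightarrow{x_i^{p-1}}A_i\xrightarrow{x_i}A_i\to0$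 of $k$ over $A_i=k[x_i]/(x_i^p)$ and $P_*=P^{(1)}_*\otimes_k\cdots\otimes_kP^{(r)}_*$ (summands $P_{j_1,\dots,j_r}\cong A$), $\zeta_i$ is the class of the cochain $P_*\to k$ that is the augmentation on $P_{j_1,\dots,j_r}$ with $j_i=2$, $j_\ell=0$ for $\ell\neq i$, and zero elsewhere. (For $p=2$, $\zeta_i=\eta_i^2$ where $\eta_i$ is the analogous degree-one class; in general $\zeta_i$ is the Bockstein of $\eta_i$.) $S$ is the polynomial subring they generate. *)

(* Defs.v *)
From HB Require Import structures.
From mathcomp Require Import all_boot all_order all_algebra.
From Stdlib Require Import Relations.Relation_Operators.
Set Implicit Arguments. Unset Strict Implicit. Unset Printing Implicit Defensive.
Import GRing.Theory.
Local Open Scope ring_scope.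

(* Conventions: vectors are ROW vectors, matrices act on the right.
   A = k[x_1..x_r]/(x_i^p) (commutative), so a (finitely generated = finite
   dimensional) A-module is a k-space k^n together with r commuting
   matrices X_i with X_i^p = 0 (X_i = action of x_i). *)

Section Defs.
Variables (k : fieldType) (r p : nat).

Record amod := AMod { adim : nat; aact : 'I_r -> 'M[k]_adim }.

Definition is_mod (X : amod) : Prop :=
  (forall i j, aact X i *m aact X j = aact X j *m aact X i) /\
  (forall i, aact X i ^+ p = 0).

Definition is_hom (X Y : amod) (f : 'M[k]_(adim X, adim Y)) : Prop :=
  forall i, aact X i *m f = f *m aact Y i.

Definition kmod : amod := AMod (fun _ : 'I_r => (0 : 'M[k]_1)).

(* chain Z X : X -> Y_1 -> ... -> Y_m -> Z  (Z fixed target) *)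
Inductive chain (Z : amod) : amod -> Type :=
| cend (X : amod) : 'M[k]_(adim X, adim Z) -> chain Z X
| cstep (X Y : amod) : 'M[k]_(adim X, adim Y) -> chain Z Y -> chain Z X.

(* An n-extension 0 -> N -> E_n -> ... -> E_1 -> Z -> 0 (n >= 1):
   first middle term, the map N -> E_n, and the rest of the chain. *)
Record ext (N Z : amod) := Ext {
  e_first : amod;
  e_inj : 'M[k]_(adim N, adim e_first);
  e_rest : chain Z e_first }.

Fixpoint exact_from (Z X : amod) (c : chain Z X) {struct c} :
    forall W : amod, 'M[k]_(adim W, adim X) -> Prop :=
  match c in chain _ X' return forall W : amod, 'M[k]_(adim W, adim X') -> Prop with
  | cend X g => fun W f =>
      [/\ f *m g = 0, (\rank f + \rank g)%N = adim X, row_full g,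
          is_hom g & is_mod Z]
  | cstep X Y g c' => fun W f =>
      [/\ f *m g = 0, (\rank f + \rank g)%N = adim X, is_hom g,
          is_mod Y & exact_from c' g]
  end.

Definition ext_exact (N Z : amod) (e : ext N Z) : Prop :=
  [/\ is_mod N, is_mod (e_first e), row_free (e_inj e), is_hom (e_inj e)
    & exact_from (e_rest e) (e_inj e)].

(* morphism of sequences, identity at both ends *)
Fixpoint chain_morph (Z X1 : amod) (c1 : chain Z X1) {struct c1} :
    forall X2 : amod, 'M[k]_(adim X1, adim X2) -> chain Z X2 -> Prop :=
  match c1 in chain _ X1'
    return forall X2 : amod, 'M[k]_(adim X1', adim X2) -> chain Z X2 -> Prop with
  | cend X1' g1 => fun X2 h c2 =>
      match c2 in chain _ X2' return 'M[k]_(adim X1', adim X2') -> Prop with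
      | cend _ g2 => fun h => g1 = h *m g2
      | cstep _ _ _ _ => fun _ => False
      end h
  | cstep X1' Y1 g1 c1' => fun X2 h c2 =>
      match c2 in chain _ X2' return 'M[k]_(adim X1', adim X2') -> Prop with
      | cend _ _ => fun _ => False
      | cstep _ Y2 g2 c2' => fun h =>
          exists h' : 'M[k]_(adim Y1, adim Y2),
            [/\ is_hom h', g1 *m h' = h *m g2 & chain_morph c1' h' c2']
      end h
  end.

Definition ext_morph (N Z : amod) (e1 e2 : ext N Z) : Prop :=
  exists h : 'M[k]_(adim (e_first e1), adim (e_first e2)),
    [/\ is_hom h, e_inj e1 *m h = e_inj e2 & chain_morph (e_rest e1) h (e_rest e2)].

Definition yoneda_step (N Z : amod) (e1 e2 : ext N Z) : Prop :=
  [/\ ext_exact e1, ext_exact e2 & ext_morph e1 e2].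

Definition yoneda_eq (N Z : amod) : ext N Z -> ext N Z -> Prop :=
  clos_refl_sym_trans (ext N Z) (@yoneda_step N Z).

Fixpoint splice_chain (X : amod) (c : chain kmod X) (e2 : ext kmod kmod)
    {struct c} : chain kmod X :=
  match c in chain _ X' return chain kmod X' with
  | cend X' g => cstep (g *m e_inj e2) (e_rest e2)
  | cstep X' Y g c' => cstep g (splice_chain c' e2)
  end.

Definition splice (e1 e2 : ext kmod kmod) : ext kmod kmod :=
  Ext (e_inj e1) (splice_chain (e_rest e1) e2).

(* Kronecker product: (u (x) v) (A (x) B) = (u A) (x) (v B), where
   u (x) v := mxvec (u^T *m v) *)
Definition kron m n m' n' (A : 'M[k]_(m, n)) (B : 'M[k]_(m', n')) :
    'M[k]_(m * m', n * n') :=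
  lin_mx (fun X : 'M[k]_(m, m') => A^T *m X *m B).

(* comultiplications, as the action of x_i on X (x) M *)
Definition delta_Gr m n (a : 'M[k]_m) (b : 'M[k]_n) : 'M[k]_(m * n) :=
  kron a 1%:M + kron a b + kron 1%:M b.
Definition delta_Lie m n (a : 'M[k]_m) (b : 'M[k]_n) : 'M[k]_(m * n) :=
  kron a 1%:M + kron 1%:M b.

Definition tmod (d : forall m n, 'M[k]_m -> 'M[k]_n -> 'M[k]_(m * n))
  (X M : amod) : amod := AMod (fun i => d _ _ (aact X i) (aact M i)).

Section Theta.
Variables (d : forall m n, 'M[k]_m -> 'M[k]_n -> 'M[k]_(m * n)) (M : amod).

(* the functor - (x)_k M on a chain ending at k, identifying k (x) M = M *)
Fixpoint tchain (X : amod) (c : chain kmod X) {struct c} :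
    chain M (tmod d X M) :=
  match c in chain _ X' return chain M (tmod d X' M) with
  | cend X' g => @cend M (tmod d X' M) (castmx (erefl, mul1n (adim M)) (kron g (1%:M : 'M[k]_(adim M))))
  | cstep X' Y g c' => @cstep M (tmod d X' M) (tmod d Y M) (kron g (1%:M : 'M[k]_(adim M))) (tchain c')
  end.

Definition Theta (e : ext kmod kmod) : ext M M :=
  @Ext M M (tmod d (e_first e) M) (castmx (mul1n (adim M), erefl) (kron (e_inj e) (1%:M : 'M[k]_(adim M))))
      (tchain (e_rest e)).
End Theta.

(* A_i = k[x_i]/(x_i^p) inflated to A (x_j acts as 0 for j <> i),
   basis 1, x_i, ..., x_i^(p-1) *)
Definition shiftp : 'M[k]_p := \matrix_(a, b) ((b : nat) == a.+1)%:R.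
Definition Ai (i : 'I_r) : amod :=
  AMod (fun j => if j == i then shiftp else 0).

(* zeta_i : 0 -> k -> A_i --x_i--> A_i -> k -> 0, with k -> A_i : 1 |-> x_i^(p-1)
   and A_i -> k the augmentation *)
Definition zeta (i : 'I_r) : ext kmod kmod :=
  @Ext kmod kmod (Ai i) (\row_(b < p) ((b : nat) == p.-1)%:R)
    (@cstep kmod (Ai i) (Ai i) shiftp (@cend kmod (Ai i) (\col_(a < p) ((a : nat) == 0%N)%:R))).

Definition zeta_monomial (i0 : 'I_r) (s : seq 'I_r) : ext kmod kmod :=
  foldl (fun e i => splice e (zeta i)) (zeta i0) s.

End Defs.

(* Main.v *)
Require Import Defs.
From HB Require Import structures.
From mathcomp Require Import all_boot all_order all_algebra zify.
Set Implicit Arguments. Unset Strict Implicit. Unset Printing Implicit Defensive.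
Import GRing.Theory.
Local Open Scope ring_scope.

Lemma index_allpairs (T1 T2 : eqType) (s1 : seq T1) (s2 : seq T2) x1 x2 :
  x1 \in s1 -> x2 \in s2 ->
  index (x1, x2) [seq (a, b) | a <- s1, b <- s2] = (index x1 s1 * size s2 + index x2 s2)%N.
Proof.
move=> h1 h2; elim: s1 h1 => //= a s1 IH.
rewrite in_cons index_cat; case: eqP => [<- _ | ne /= h1].
  rewrite eqxx /= mul0n add0n; have -> : (x1, x2) \in [seq (x1, b) | b <- s2].
    by apply/mapP; exists x2.
  by rewrite index_map //; move=> u v [].
have -> : (x1, x2) \in [seq (a, b) | b <- s2] = false.
  by apply/mapP => -[b _ [e _]]; apply: ne; rewrite e.
rewrite size_map IH //; case: eqP => [e|_]; [by case: ne | by rewrite mulSn addnA].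
Qed.

Lemma mxvec_indexE m n (i : 'I_m) (j : 'I_n) :
  nat_of_ord (mxvec_index i j) = (i * n + j)%N.
Proof.
rewrite /mxvec_index /= /enum_rank enum_rank_in.unlock /=.
rewrite insubdK; last first.
  by rewrite cardE [_ \in _]index_mem mem_enum.
rewrite enumT unlock /= /prod_enum.
by rewrite index_allpairs ?mem_enum // !index_enum_ord size_enum_ord.
Qed.

Section K.
Variable k : fieldType.
Lemma kron_vec m n m' n' (A : 'M[k]_(m, n)) (B : 'M[k]_(m', n')) u :
  mxvec u *m kron A B = mxvec (A^T *m u *m B).
Proof. exact: (mul_vec_lin (mulmxr B \o mulmx A^T) u). Qed.

Lemma vec_eq m m' N (K K' : 'M[k]_(m * m', N)) :
  (forall u, mxvec u *m K = mxvec u *m K') -> K = K'.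
Proof.
move=> H; apply/row_matrixP => i.
by rewrite !rowE -(vec_mxK (delta_mx 0 i)) H.
Qed.

Lemma kron_mul m n m' n' q q' (A : 'M[k]_(m, n)) (B : 'M[k]_(m', n'))
  (C : 'M[k]_(n, q)) (D : 'M[k]_(n', q')) :
  kron A B *m kron C D = kron (A *m C) (B *m D).
Proof. by apply: vec_eq => u; rewrite mulmxA !kron_vec trmx_mul !mulmxA. Qed.

Lemma kron_addl m n m' n' (A A' : 'M[k]_(m, n)) (B : 'M[k]_(m', n')) :
  kron (A + A') B = kron A B + kron A' B.
Proof.
apply: vec_eq => u; rewrite mulmxDr !kron_vec linearD /=.
by rewrite mulmxDl mulmxDl linearD.
Qed.

Lemma kron_addr m n m' n' (A : 'M[k]_(m, n)) (B B' : 'M[k]_(m', n')) :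
  kron A (B + B') = kron A B + kron A B'.
Proof. by apply: vec_eq => u; rewrite mulmxDr !kron_vec mulmxDr linearD. Qed.

Lemma kron0l m n m' n' (B : 'M[k]_(m', n')) : kron (0 : 'M[k]_(m, n)) B = 0.
Proof. by apply: vec_eq => u; rewrite kron_vec trmx0 mul0mx mul0mx mulmx0 linear0. Qed.

Lemma kron0r m n m' n' (A : 'M[k]_(m, n)) : kron A (0 : 'M[k]_(m', n')) = 0.
Proof. by apply: vec_eq => u; rewrite kron_vec mulmx0 mulmx0 linear0. Qed.

Lemma kron11 m m' : kron (1%:M : 'M[k]_m) (1%:M : 'M[k]_m') = 1%:M.
Proof. by apply: vec_eq => u; rewrite kron_vec trmx1 mul1mx !mulmx1. Qed.

Lemma kron_mulrnl m n m' n' (A : 'M[k]_(m, n)) (B : 'M[k]_(m', n')) j :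
  kron (A *+ j) B = kron A B *+ j.
Proof.
elim: j => [|j IH]; first by rewrite !mulr0n kron0l.
by rewrite !mulrS kron_addl IH.
Qed.

Lemma kron_sumr m n m' n' (I : finType) (A : 'M[k]_(m, n)) (B : I -> 'M[k]_(m', n')) :
  kron A (\sum_i B i) = \sum_i kron A (B i).
Proof.
apply: (big_ind2 (fun x y => kron A x = y)) => //; first exact: kron0r.
by move=> x1 x2 y1 y2 <- <-; rewrite kron_addr.
Qed.
Lemma kron_suml m n m' n' (I : finType) (A : I -> 'M[k]_(m, n)) (B : 'M[k]_(m', n')) :
  kron (\sum_i A i) B = \sum_i kron (A i) B.
Proof.
apply: (big_ind2 (fun x y => kron x B = y)) => //; first exact: kron0l.
by move=> x1 x2 y1 y2 <- <-; rewrite kron_addl.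
Qed.

Lemma kron_exp m n (A : 'M[k]_m) (B : 'M[k]_n) j :
  (kron A B) ^+ j = kron (A ^+ j) (B ^+ j).
Proof.
elim: j => [|j IH]; first by rewrite !expr0 kron11.
by rewrite !exprS IH -kron_mul.
Qed.

Lemma kronE m n m' n' (A : 'M[k]_(m, n)) (B : 'M[k]_(m', n'))
  (i : 'I_m) (j : 'I_m') (i' : 'I_n) (j' : 'I_n') :
  kron A B (mxvec_index i j) (mxvec_index i' j') = A i i' * B j j'.
Proof.
have := congr1 (fun K : 'rV[k]_(n * n') => K 0 (mxvec_index i' j')) (kron_vec A B (delta_mx i j)).
rewrite mxvecE mxvec_delta -rowE mxE => ->.
rewrite !mxE (bigD1 j) //= big1 ?addr0; last first.
  move=> c /negbTE nc; rewrite !mxE (bigD1 i) //= big1 ?addr0.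
    by rewrite !mxE eqxx nc /= mulr0 mul0r.
  by move=> d /negbTE nd; rewrite !mxE nd /= mulr0.
rewrite !mxE (bigD1 i) //= big1 ?addr0.
  by rewrite !mxE !eqxx /= mulr1.
by move=> d /negbTE nd; rewrite !mxE nd /= mulr0.
Qed.

Lemma rank_kron1 m n q (A : 'M[k]_(m,n)) :
  \rank (kron A (1%:M : 'M[k]_q)) = (\rank A * q)%N.
Proof.
set r := \rank A.
set L := col_ebase A; set U := row_ebase A.
pose X := L *m (pid_mx r : 'M[k]_(m,r)); pose Y := (pid_mx r : 'M[k]_(r,n)) *m U.
pose X' := (pid_mx r : 'M[k]_(r,m)) *m invmx L.
pose Y' := invmx U *m (pid_mx r : 'M[k]_(n,r)).
have eA : A = X *m Y.
  by rewrite /X /Y mulmxA -(mulmxA L) pid_mx_id ?rank_leq_row // mulmx_ebase.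
have hX : X' *m X = 1%:M.
  rewrite /X' /X mulmxA -(mulmxA _ (invmx L)) mulVmx ?col_ebase_unit //.
  by rewrite mulmx1 pid_mx_id ?rank_leq_row // pid_mx_1.
have hY : Y *m Y' = 1%:M.
  rewrite /Y' /Y mulmxA -(mulmxA _ U) mulmxV ?row_ebase_unit //.
  by rewrite mulmx1 pid_mx_id ?rank_leq_col // pid_mx_1.
have fY : row_free (kron Y (1%:M : 'M[k]_q)).
  rewrite -row_leq_rank.
  have := mxrankM_maxl (kron Y (1%:M : 'M[k]_q)) (kron Y' 1%:M).
  by rewrite kron_mul hY mulmx1 kron11 mxrank1.
have -> : kron A (1%:M : 'M[k]_q) = kron X 1%:M *m kron Y 1%:M by rewrite kron_mul mulmx1 -eA.
rewrite mxrankMfree //.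
apply/eqP; rewrite eqn_leq rank_leq_col /=.
have := mxrankM_maxr (kron X' (1%:M : 'M[k]_q)) (kron X 1%:M).
by rewrite kron_mul hX mulmx1 kron11 mxrank1.
Qed.

Lemma castmx_mull m m' n p (e : m = m') (A : 'M[k]_(m, n)) (B : 'M[k]_(n, p)) :
  castmx (e, erefl) (A *m B) = castmx (e, erefl) A *m B.
Proof. by subst m'; rewrite !castmx_id. Qed.
Lemma castmx_mulr m n p p' (e : p = p') (A : 'M[k]_(m, n)) (B : 'M[k]_(n, p)) :
  castmx (erefl, e) (A *m B) = A *m castmx (erefl, e) B.
Proof. by subst p'; rewrite !castmx_id. Qed.
Lemma castmx_mulmid m n n' p (e : n = n') (A : 'M[k]_(m, n)) (B : 'M[k]_(n', p)) :
  castmx (erefl, e) A *m B = A *m castmx (esym e, erefl) B.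
Proof. by subst n'; rewrite !castmx_id. Qed.
Lemma castmx_rank m m' n n' (e1 : m = m') (e2 : n = n') (A : 'M[k]_(m, n)) :
  \rank (castmx (e1, e2) A) = \rank A.
Proof. by subst m' n'; rewrite !castmx_id. Qed.
Lemma castmx_inj m m' n n' (e1 : m = m') (e2 : n = n') (A B : 'M[k]_(m, n)) :
  castmx (e1, e2) A = castmx (e1, e2) B -> A = B.
Proof. by subst m' n'; rewrite !castmx_id. Qed.

Lemma kron1_cast n (B : 'M[k]_n) :
  castmx (mul1n n, mul1n n) (kron (1%:M : 'M[k]_1) B) = B.
Proof.
apply/matrixP => i j; rewrite castmxE.
have ci : forall x : 'I_n, cast_ord (esym (mul1n n)) x = mxvec_index (ord0 : 'I_1) x.
  by move=> x; apply: ord_inj; rewrite mxvec_indexE /= mul0n.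
by rewrite !ci kronE !mxE mul1r.
Qed.

Lemma rank_mul0 m n q (A : 'M[k]_(m, n)) (B : 'M[k]_(n, q)) :
  A *m B = 0 -> (\rank A + \rank B <= n)%N.
Proof.
move=> AB; have : (A <= kermx B)%MS by apply/sub_kermxP.
move/mxrankS; rewrite mxrank_ker => h.
have hB := rank_leq_row B.
by rewrite -(leq_add2r (\rank B)) subnK // in h.
Qed.

End K.


Section Char.
Variables (k : fieldType) (p : nat).
Hypothesis hp : prime p.
Hypothesis hchar : p \in [pchar k].

Lemma frob n (x y : 'M[k]_n) : GRing.comm x y -> (x + y) ^+ p = x ^+ p + y ^+ p.
Proof.
move=> cxy; rewrite exprDn_comm //.
have [p' ep] : exists p', p = p'.+1 by exists p.-1; rewrite prednK // prime_gt0.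
rewrite ep big_ord_recl big_ord_recr /= big1 ?add0r.
  by rewrite subn0 expr0 mulr1 bin0 mulr1n subnn expr0 mul1r binn mulr1n.
move=> i _; rewrite -scaler_nat.
suff -> : ('C(p'.+1, (bump 0 i)) %:R : k) = 0 by rewrite scale0r.
apply/eqP; rewrite -(dvdn_pcharf hchar) -ep prime_dvd_bin // ep /bump /=.
by rewrite add1n ltnS ltn_ord.
Qed.

Lemma frob1 n (a : 'M[k]_n) : a ^+ p = 0 -> (1%:M + a) ^+ p = 1%:M.
Proof.
move=> ha; rewrite frob; last exact: commr_sym (commr1 a).
by rewrite ha addr0 expr1n.
Qed.

Lemma comm_mx n (x y : 'M[k]_n) : x *m y = y *m x -> GRing.comm x y.
Proof. by rewrite /GRing.comm -!mulmxE. Qed.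

Lemma Gr_eq m n (a : 'M[k]_m) (b : 'M[k]_n) :
  delta_Gr a b = kron (1%:M + a) (1%:M + b) - 1%:M.
Proof.
rewrite /delta_Gr kron_addl !kron_addr kron11.
set x := kron a 1%:M; set y := kron a b; set z := kron 1%:M b.
by rewrite [1%:M + z]addrC [RHS]addrAC addrK addrC.
Qed.

Lemma Gr_comm m n (a a' : 'M[k]_m) (b b' : 'M[k]_n) :
  a *m a' = a' *m a -> b *m b' = b' *m b ->
  delta_Gr a b *m delta_Gr a' b' = delta_Gr a' b' *m delta_Gr a b.
Proof.
move=> ha hb; rewrite !Gr_eq.
set K := kron _ _; set K' := kron _ _.
have cKK : K *m K' = K' *m K.
  rewrite /K /K' !kron_mul !mulmxDl !mulmxDr !mul1mx !mulmx1 ha hb.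
  congr kron; rewrite -!addrA; congr (_ + _); rewrite addrCA; congr (_ + _); by rewrite addrC.
have c1 := comm_mx cKK.
rewrite !mulmxE; apply: (commrB _ (commr1 _)).
exact: commr_sym (commrB (commr_sym c1) (commr1 _)).
Qed.

Lemma Gr_nil m n (a : 'M[k]_m) (b : 'M[k]_n) :
  a ^+ p = 0 -> b ^+ p = 0 -> delta_Gr a b ^+ p = 0.
Proof.
move=> ha hb; rewrite Gr_eq.
set K := kron _ _.
have hK : K ^+ p = 1%:M by rewrite /K kron_exp !frob1 // kron11.
have : K ^+ p = (K - 1%:M) ^+ p + 1%:M.
  by have := frob (commr1 (K - 1%:M)); rewrite subrK expr1n.
by rewrite hK => /esym/(canRL (addrK _)); rewrite subrr.
Qed.

Lemma Lie_comm m n (a a' : 'M[k]_m) (b b' : 'M[k]_n) :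
  a *m a' = a' *m a -> b *m b' = b' *m b ->
  delta_Lie a b *m delta_Lie a' b' = delta_Lie a' b' *m delta_Lie a b.
Proof.
move=> ha hb; rewrite /delta_Lie !mulmxDl !mulmxDr !kron_mul !mul1mx !mulmx1 ha hb.
by rewrite -!addrA; congr (_ + _); rewrite !addrA; congr (_ + _); rewrite addrC.
Qed.

Lemma Lie_nil m n (a : 'M[k]_m) (b : 'M[k]_n) :
  a ^+ p = 0 -> b ^+ p = 0 -> delta_Lie a b ^+ p = 0.
Proof.
move=> ha hb; rewrite /delta_Lie frob.
  by rewrite !kron_exp ha hb kron0l kron0r addr0.
by apply: comm_mx; rewrite !kron_mul !mul1mx !mulmx1.
Qed.

End Char.

Section Hom.
Variable k : fieldType.
Lemma Gr_hom m m' n (g : 'M[k]_(m, m')) (a : 'M[k]_m) (a' : 'M[k]_m') (b : 'M[k]_n) :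
  a *m g = g *m a' ->
  delta_Gr a b *m kron g 1%:M = kron g 1%:M *m delta_Gr a' b.
Proof.
move=> h; rewrite /delta_Gr !mulmxDl !mulmxDr !kron_mul !mul1mx !mulmx1 h //.
Qed.
Lemma Lie_hom m m' n (g : 'M[k]_(m, m')) (a : 'M[k]_m) (a' : 'M[k]_m') (b : 'M[k]_n) :
  a *m g = g *m a' ->
  delta_Lie a b *m kron g 1%:M = kron g 1%:M *m delta_Lie a' b.
Proof.
move=> h; rewrite /delta_Lie !mulmxDl !mulmxDr !kron_mul !mul1mx !mulmx1 h //.
Qed.
Lemma Gr_k n (b : 'M[k]_n) : delta_Gr (0 : 'M[k]_1) b = kron 1%:M b.
Proof. by rewrite /delta_Gr !kron0l !add0r. Qed.
Lemma Lie_k n (b : 'M[k]_n) : delta_Lie (0 : 'M[k]_1) b = kron 1%:M b.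
Proof. by rewrite /delta_Lie !kron0l !add0r. Qed.
End Hom.


Section Casts.
Variable k : fieldType.
Lemma castmx0 m m' n n' (e1 : m = m') (e2 : n = n') :
  castmx (e1, e2) (0 : 'M[k]_(m, n)) = 0.
Proof. by subst m' n'; rewrite castmx_id. Qed.

Lemma castmx_irr m m' n n' (e1 e1' : m = m') (e2 e2' : n = n') (A : 'M[k]_(m, n)) :
  castmx (e1, e2) A = castmx (e1', e2') A.
Proof. by rewrite (eq_irrelevance e1 e1') (eq_irrelevance e2 e2'). Qed.

Lemma cast_col_b w n (K : 'M[k]_(w, 1 * n)) (b : 'M[k]_n) :
  castmx (erefl, mul1n n) K *m b = castmx (erefl, mul1n n) (K *m kron 1%:M b).
Proof.
rewrite -[b in LHS]kron1_cast castmx_mulmid castmx_comp castmx_mulr.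
by congr (_ *m _); apply: castmx_irr.
Qed.

Lemma cast_row_b w n (K : 'M[k]_(1 * n, w)) (b : 'M[k]_n) :
  b *m castmx (mul1n n, erefl) K = castmx (mul1n n, erefl) (kron 1%:M b *m K).
Proof.
rewrite -[b in LHS]kron1_cast.
have -> : castmx (mul1n n, mul1n n) (kron (1%:M : 'M[k]_1) b) =
          castmx (mul1n n, erefl) (castmx (erefl, mul1n n) (kron (1%:M : 'M[k]_1) b)).
  by rewrite castmx_comp; apply: castmx_irr.
rewrite -castmx_mull castmx_mulmid castmx_comp.
congr castmx; congr (_ *m _); rewrite castmx_id //.
Qed.

Lemma rank_lmul m w w' (P : 'M[k]_(w', w)) (Q : 'M[k]_(w, w')) (f : 'M[k]_(w, m)) :
  Q *m P = 1%:M -> \rank (P *m f) = \rank f.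
Proof.
move=> QP; apply/eqP; rewrite eqn_leq mxrankM_maxr /=.
by have := mxrankM_maxr Q (P *m f); rewrite mulmxA QP mul1mx.
Qed.

Lemma exact_lmul p r (Z X : amod k r) (c : chain Z X) (W : amod k r) (f : 'M[k]_(adim W, adim X))
   (W' : amod k r) (P : 'M[k]_(adim W', adim W)) (Q : 'M[k]_(adim W, adim W')) :
  Q *m P = 1%:M -> exact_from p c f -> exact_from p c (P *m f).
Proof.
move=> QP; case: c f => [X0 g | X0 Y g c'] f /=.
  by case=> h1 h2 h3 h4 h5; split => //; rewrite ?(rank_lmul _ QP) // -mulmxA h1 mulmx0.
by case=> h1 h2 h3 h4 h5; split => //; rewrite ?(rank_lmul _ QP) // -mulmxA h1 mulmx0.
Qed.
End Casts.

Section Theta.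
Variables (k : fieldType) (p r : nat) (M : amod k r).
Hypothesis hM : is_mod p M.
Variable d : forall m n, 'M[k]_m -> 'M[k]_n -> 'M[k]_(m * n).
Hypothesis dmod : forall X : amod k r, is_mod p X -> is_mod p (tmod d X M).
Hypothesis dhom : forall m m' n (g : 'M[k]_(m, m')) a a' (b : 'M[k]_n),
  a *m g = g *m a' -> d a b *m kron g 1%:M = kron g 1%:M *m d a' b.
Hypothesis dk : forall n (b : 'M[k]_n), @d 1 n 0 b = kron 1%:M b.

Lemma hom_tmod (X Y : amod k r) (g : 'M[k]_(adim X, adim Y)) :
  is_hom g -> @is_hom _ _ (tmod d X M) (tmod d Y M) (kron g 1%:M).
Proof. by move=> h i; apply: dhom. Qed.

Lemma theta_exact X (c : chain (kmod k r) X) (W : amod k r) (f : 'M[k]_(adim W, adim X)) :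
  exact_from p c f -> exact_from p (tchain d M c) (W := tmod d W M) (kron f 1%:M).
Proof.
elim: c W f => [X0 g | X0 Y g c' IH] W f /=.
  case=> h1 h2 h3 h4 h5; split => //.
  - by rewrite -castmx_mulr kron_mul h1 kron0l castmx0.
  - by rewrite castmx_rank !rank_kron1 -mulnDl h2.
  - by rewrite /row_full castmx_rank rank_kron1 (eqP h3) mul1n.
  - move=> i /=; rewrite cast_col_b -castmx_mulr; congr castmx.
    by rewrite -dk; apply: dhom; rewrite (h4 i) /= mulmx0.
case=> h1 h2 h3 h4 h5; split => //.
- by rewrite kron_mul h1 kron0l.
- by rewrite !rank_kron1 -mulnDl h2.
- exact: hom_tmod.
- exact: dmod.
- exact: IH.
Qed.

Lemma theta_ext_exact (e : ext (kmod k r) (kmod k r)) :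
  ext_exact p e -> ext_exact p (Theta d M e).
Proof.
case: e => X inj c; case=> /= h1 h2 h3 h4 h5; split => //=.
- exact: dmod.
- by rewrite /row_free castmx_rank rank_kron1 (eqP h3) mul1n.
- move=> i /=; rewrite cast_row_b -castmx_mull; congr castmx.
  by rewrite -dk; apply: dhom; rewrite -(h4 i) /= mul0mx.
- have -> : castmx (mul1n (adim M), erefl) (kron inj (1%:M : 'M[k]_(adim M))) =
     castmx (mul1n (adim M), erefl) (1%:M : 'M[k]_(1 * adim M)) *m kron inj 1%:M.
    by rewrite -castmx_mull mul1mx.
  apply: (exact_lmul (W := tmod d (kmod k r) M) (Q :=
            (castmx (erefl, mul1n (adim M)) (1%:M : 'M[k]_(1 * adim M))))).
    rewrite castmx_mulmid castmx_comp mul1mx.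
    by rewrite (castmx_irr _ _ erefl erefl) castmx_id.
  exact: theta_exact.
Qed.
End Theta.


Section Splice.
Variables (k : fieldType) (p r : nat).

Lemma hom_comp (X Y Z : amod k r) (f : 'M[k]_(adim X, adim Y)) (g : 'M[k]_(adim Y, adim Z)) :
  is_hom f -> is_hom g -> is_hom (f *m g).
Proof. by move=> hf hg i; rewrite mulmxA hf -!mulmxA hg. Qed.

Lemma splice_exact X (c : chain (kmod k r) X) (W : amod k r) (f : 'M[k]_(adim W, adim X))
  (e2 : ext (kmod k r) (kmod k r)) :
  exact_from p c f -> ext_exact p e2 -> exact_from p (splice_chain c e2) f.
Proof.
elim: c W f => [X0 g | X0 Y g c' IH] W f /=.
  case=> h1 h2 h3 h4 h5; case: e2 => E inj c2 [/= k1 k2 k3 k4 k5]; split.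
  - by rewrite mulmxA h1 mul0mx.
  - by rewrite mxrankMfree.
  - exact: (hom_comp h4 k4).
  - exact: k2.
  have : (1%:M <= g)%MS by rewrite sub1mx.
  case/submxP => D hD.
  by apply: (exact_lmul (Q := D)) => //; rewrite hD.
case=> h1 h2 h3 h4 h5; split => //; exact: IH.
Qed.

Lemma splice_ext_exact (e1 e2 : ext (kmod k r) (kmod k r)) :
  ext_exact p e1 -> ext_exact p e2 -> ext_exact p (splice e1 e2).
Proof.
case: e1 => X inj c [/= h1 h2 h3 h4 h5] he2; split => //=.
exact: splice_exact.
Qed.
End Splice.

Section Zeta.
Variables (k : fieldType) (p' r : nat).
Local Notation p := p'.+1.

Lemma sum_ind n x (F : 'I_n.+1 -> k) :
  \sum_(c < n.+1) ((c : nat) == x)%:R * F c = if (x < n.+1)%N then F (inord x) else 0.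
Proof.
case: ltnP => h.
  rewrite (bigD1 (inord x)) /= ?inordK ?eqxx ?mul1r // big1 ?addr0 // => c hc.
  have -> : ((c : nat) == x) = false.
    by apply/negbTE; apply: contra hc => /eqP e; apply/eqP; apply: ord_inj; rewrite inordK // e.
  by rewrite mul0r.
rewrite big1 // => c _.
have -> : ((c : nat) == x) = false by apply/negbTE; rewrite neq_ltn (leq_trans (ltn_ord c) h).
by rewrite mul0r.
Qed.

Definition S := shiftp k p.
Definition inj : 'M[k]_(1, p) := \row_(b < p) ((b : nat) == p.-1)%:R.
Definition aug : 'M[k]_(p, 1) := \col_(a < p) ((a : nat) == 0%N)%:R.

Lemma injS : inj *m S = 0.
Proof.
apply/matrixP => i j; rewrite !mxE /inj /S /shiftp.
under eq_bigr do rewrite !mxE.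
rewrite sum_ind /= ltnSn inordK //.
by have -> : ((j : nat) == p'.+1) = false by apply/negbTE; rewrite neq_ltn ltn_ord.
Qed.

Lemma Saug : S *m aug = 0.
Proof.
apply/matrixP => a b; rewrite !mxE /aug /S /shiftp.
under eq_bigr do rewrite !mxE.
rewrite sum_ind; case: ifP => h //.
by rewrite inordK.
Qed.

Lemma SST : S *m S^T = pid_mx p'.
Proof.
apply/matrixP => a b; rewrite !mxE /S /shiftp.
under eq_bigr do rewrite !mxE.
rewrite sum_ind; case: ifP => h.
  by rewrite inordK // eqSS -ltnS h andbT.
by rewrite -ltnS h andbF.
Qed.

Lemma Spow j a b : (S ^+ j) a b = ((b : nat) == (a + j)%N)%:R.
Proof.
elim: j a b => [|j IH] a b.
  rewrite expr0 !mxE addn0 eq_sym.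
  by case: eqP => [->|ne]; case: eqP => // e; case: ne; apply: ord_inj.
rewrite exprSr -mulmxE mxE.
under eq_bigr do rewrite IH /S /shiftp mxE.
rewrite sum_ind; case: ifP => h; first by rewrite inordK // addnS.
have -> : ((b : nat) == (a + j.+1)%N) = false.
  apply/negbTE; rewrite neq_ltn addnS; have := ltn_ord b; move: h; lia.
by [].
Qed.

Lemma Snil : S ^+ p = 0.
Proof.
apply/matrixP => a b; rewrite Spow mxE.
have -> : ((b : nat) == (a + p)%N) = false.
  by apply/negbTE; rewrite neq_ltn (leq_trans (ltn_ord b)) // leq_addl.
by [].
Qed.

Lemma rank_inj : \rank inj = 1%N.
Proof.
rewrite rank_rV; case: eqP => // h.
have := congr1 (fun A : 'M[k]_(1, p) => A 0 ord_max) h.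
by rewrite !mxE eqxx => /eqP; rewrite oner_eq0.
Qed.

Lemma rank_aug : \rank aug = 1%N.
Proof.
rewrite -mxrank_tr rank_rV; case: eqP => // h.
have := congr1 (fun A : 'M[k]_(1, p) => A 0 ord0) h.
by rewrite !mxE eqxx => /eqP; rewrite oner_eq0.
Qed.

Lemma rank_S : \rank S = p'.
Proof.
apply/eqP; rewrite eqn_leq; apply/andP; split.
  by have := rank_mul0 injS; rewrite rank_inj add1n ltnS.
by have := mxrankM_maxl S S^T; rewrite SST rank_pid_mx.
Qed.

Lemma Ai_mod (i : 'I_r) : is_mod p (Ai k p i).
Proof.
split => [j1 j2 | j] /=.
  by case: (j1 == i); case: (j2 == i); rewrite ?mulmx0 ?mul0mx.
by case: (j == i); [exact: Snil | exact: expr0n].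
Qed.

Lemma kmod_mod : is_mod p (kmod k r).
Proof. by split => [j1 j2 | j] /=; [rewrite mulmx0 | exact: expr0n]. Qed.

Lemma zeta_exact (i : 'I_r) : ext_exact p (zeta k p i).
Proof.
split => /=.
- exact: kmod_mod.
- exact: Ai_mod.
- by rewrite -row_leq_rank -/inj rank_inj.
- move=> j /=; rewrite mul0mx; case: (j == i); last by rewrite mulmx0.
  by rewrite -/inj -/S injS.
split.
- exact: injS.
- by rewrite -/inj -/S rank_inj rank_S.
- by move=> j /=; case: (j == i); rewrite ?mulmx0 ?mul0mx.
- exact: Ai_mod.
split.
- exact: Saug.
- by rewrite -/aug -/S rank_aug rank_S addn1.
- by rewrite /row_full -/aug rank_aug.
- move=> j /=; rewrite mulmx0; case: (j == i); last by rewrite mul0mx.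
  exact: Saug.
- exact: kmod_mod.
Qed.
End Zeta.

Lemma monomial_exact (k : fieldType) p' r (i0 : 'I_r) (s : seq 'I_r) :
  ext_exact p'.+1 (zeta_monomial k p'.+1 i0 s).
Proof.
rewrite /zeta_monomial; elim: s (zeta k p'.+1 i0) (zeta_exact k p' i0) => //= i s IH e he.
by apply: IH; apply: splice_ext_exact => //; exact: zeta_exact.
Qed.


Lemma pick_sum (V : nmodType) n (x : 'I_n) (F : 'I_n -> V) :
  \sum_a F a *+ (x == a) = F x.
Proof.
rewrite (bigD1 x) //= eqxx mulr1n big1 ?addr0 // => a ha.
by rewrite eq_sym (negbTE ha) mulr0n.
Qed.
Lemma pick_sum' (V : nmodType) n (x : 'I_n) (F : 'I_n -> V) :
  \sum_a F a *+ (a == x) = F x.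
Proof. by under eq_bigr do rewrite eq_sym; exact: pick_sum. Qed.

Section Sig.
Variables (k : fieldType) (p' : nat).
Local Notation p := p'.+1.

Definition E (c : 'I_p') : 'M[k]_p := delta_mx (widen_ord (leqnSn p') c) (lift ord0 c).

Lemma S_sum : S k p' = \sum_c E c.
Proof.
apply/matrixP => a b; rewrite summxE /S /shiftp mxE.
under eq_bigr do rewrite /E mxE.
case: (ltnP a p') => h.
  rewrite (bigD1 (Ordinal h)) //= big1 ?addr0.
    have -> : a == widen_ord (leqnSn p') (Ordinal h) by apply/eqP; apply: ord_inj.
    by [].
  move=> c hc; have -> : (a == widen_ord (leqnSn p') c) = false; last by [].
  apply/negbTE; apply: contra hc => /eqP e; apply/eqP; apply: ord_inj; rewrite /= e.
  by [].
rewrite big1.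
  have -> : ((b : nat) == a.+1) = false; last by [].
  by apply/negbTE; have := ltn_ord b; move: h; lia.
move=> c _; have -> : (a == widen_ord (leqnSn p') c) = false; last by [].
apply/negbTE; apply/eqP => e; have := ltn_ord c; move: h; rewrite e /=; lia.
Qed.

Lemma inj_delta : inj k p' = delta_mx 0 ord_max.
Proof.
apply/matrixP => a b; rewrite /inj !mxE.
by rewrite -[(b == ord_max)]/((b : nat) == p') [a]ord1 eqxx.
Qed.

Lemma aug_delta : aug k p' = delta_mx ord0 0.
Proof.
apply/matrixP => a b; rewrite /aug !mxE.
by rewrite -[(a == ord0)]/((a : nat) == 0%N) [b]ord1 eqxx andbT.
Qed.

Variable n : nat.
Variable W : 'M[k]_n.
Definition sigma : 'M[k]_(p * n) := \sum_(a < p) kron (delta_mx a a) (W ^+ a).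

Lemma I1 (X : 'M[k]_n) :
  kron (S k p') X *m sigma = \sum_c kron (E c) (X *m W ^+ c.+1).
Proof.
rewrite S_sum kron_suml mulmx_suml; apply: eq_bigr => c _.
rewrite /sigma mulmx_sumr.
under eq_bigr do rewrite kron_mul /E mul_delta_mx_cond kron_mulrnl.
by rewrite pick_sum lift0.
Qed.

Lemma I2 (X : 'M[k]_n) :
  sigma *m kron (S k p') X = \sum_c kron (E c) (W ^+ c *m X).
Proof.
rewrite S_sum kron_suml mulmx_sumr; apply: eq_bigr => c _.
rewrite /sigma mulmx_suml.
under eq_bigr do rewrite kron_mul /E mul_delta_mx_cond kron_mulrnl.
by rewrite pick_sum'.
Qed.

Lemma I3 : kron (inj k p') (1%:M : 'M[k]_n) *m sigma = kron (inj k p') (W ^+ p').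
Proof.
rewrite inj_delta /sigma mulmx_sumr.
under eq_bigr do rewrite kron_mul mul_delta_mx_cond kron_mulrnl mul1mx.
by rewrite pick_sum.
Qed.

Lemma I4 : sigma *m kron (aug k p') (1%:M : 'M[k]_n) = kron (aug k p') (1%:M : 'M[k]_n).
Proof.
rewrite aug_delta /sigma mulmx_suml.
under eq_bigr do rewrite kron_mul mul_delta_mx_cond kron_mulrnl mulmx1.
by rewrite pick_sum' expr0.
Qed.

Lemma I5 (Y : 'M[k]_n) : Y *m W = W *m Y ->
  kron 1%:M Y *m sigma = sigma *m kron 1%:M Y.
Proof.
move=> hY; rewrite /sigma mulmx_sumr mulmx_suml; apply: eq_bigr => a _.
rewrite !kron_mul mul1mx mulmx1; congr kron.
have c : GRing.comm Y W by rewrite /GRing.comm -!mulmxE.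
by have := commrX a c; rewrite /GRing.comm -!mulmxE.
Qed.
End Sig.

Section Morph.
Variables (k : fieldType) (p' r : nat).
Local Notation p := p'.+1.
Hypothesis hp : prime p.
Hypothesis hchar : p \in [pchar k].
Variable M : amod k r.
Hypothesis hM : is_mod p M.
Local Notation n := (adim M).
Local Notation G := (@delta_Gr k).
Local Notation L := (@delta_Lie k).

Definition Vm (i : 'I_r) : 'M[k]_n := 1%:M + aact M i.
Definition Wm (i : 'I_r) : 'M[k]_n := Vm i ^+ p'.

Lemma Vp i : Vm i ^+ p = 1%:M.
Proof. exact: (frob1 hp hchar (hM.2 i)). Qed.

Lemma VW i : Vm i *m Wm i = 1%:M.
Proof. by rewrite mulmxE /Wm -exprS Vp. Qed.

Lemma Wp i : Wm i ^+ p = 1%:M.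
Proof. by rewrite /Wm -exprM mulnC exprM Vp expr1n. Qed.

Lemma commW i j : aact M j *m Wm i = Wm i *m aact M j.
Proof.
have c : GRing.comm (aact M j) (Vm i).
  apply: commrD; first exact: commr1.
  by rewrite /GRing.comm -!mulmxE; exact: hM.1.
by have := commrX p' c; rewrite /GRing.comm -!mulmxE.
Qed.

Definition sig i := sigma p' (Wm i).
Definition hh i := sig i *m kron 1%:M (Wm i).

Lemma sig_hom i :
  @is_hom k r (tmod G (Ai k p i) M) (tmod L (Ai k p i) M) (sig i).
Proof.
move=> j /=; rewrite /delta_Gr /delta_Lie.
case: (eqVneq j i) => [-> | ne].
  rewrite -kron_addr !mulmxDl !mulmxDr -/(S k p') (I5 _ (commW i i)).
  congr (_ + _); rewrite /sig I1 I2; apply: eq_bigr => c _; congr kron.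
  by rewrite exprS -mulmxE mulmxA VW mul1mx mulmx1.
rewrite ?(negbTE ne) !kron0l !add0r.
exact: I5 (commW i j).
Qed.

Lemma hh_hom i :
  @is_hom k r (tmod G (Ai k p i) M) (tmod L (Ai k p i) M) (hh i).
Proof.
move=> j /=; rewrite /hh mulmxA (sig_hom i j) /= -!mulmxA; congr (_ *m _).
rewrite /delta_Lie !mulmxDl !mulmxDr !kron_mul !mul1mx !mulmx1.
by rewrite (commW i j).
Qed.

Lemma hh_inj i :
  kron (inj k p') (1%:M : 'M[k]_n) *m hh i = kron (inj k p') (1%:M : 'M[k]_n).
Proof.
rewrite /hh mulmxA /sig I3 kron_mul mulmx1 mulmxE -exprSr Wp //.
Qed.

Lemma hh_chain i :
  @chain_morph k r M _ (tchain G M (e_rest (zeta k p i))) (tmod L (Ai k p i) M) (hh i) (tchain L M (e_rest (zeta k p i))).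
Proof.
exists (sig i); split.
- exact: sig_hom.
- rewrite /hh -mulmxA kron_mul mul1mx mulmx1 /sig I1 I2.
  apply: eq_bigr => c _; congr kron.
  by rewrite mul1mx exprSr -mulmxE.
- rewrite /= -castmx_mulr; congr castmx; rewrite /sig -/(aug k p') I4 //.
Qed.

Lemma splice_morph X (c : chain (kmod k r) X) (h : 'M[k]_(adim X * n))
  (e2 : ext (kmod k r) (kmod k r)) (h1 : 'M[k]_(adim (e_first e2) * n)) :
  @chain_morph k r M _ (tchain G M c) (tmod L X M) h (tchain L M c) ->
  kron (e_inj e2) (1%:M : 'M[k]_n) *m h1 = kron (e_inj e2) 1%:M ->
  @is_hom k r (tmod G (e_first e2) M) (tmod L (e_first e2) M) h1 ->
  @chain_morph k r M _ (tchain G M (e_rest e2)) (tmod L (e_first e2) M) h1 (tchain L M (e_rest e2)) ->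
  @chain_morph k r M _ (tchain G M (splice_chain c e2)) (tmod L X M) h (tchain L M (splice_chain c e2)).
Proof.
move=> + hi hh1 hc; elim: c h => [X0 g | X0 Y g c' IH] h /=.
  rewrite -castmx_mulr => /castmx_inj hg.
  exists h1; split => //.
  have e : kron (g *m e_inj e2) (1%:M : 'M[k]_n) = kron g 1%:M *m kron (e_inj e2) 1%:M.
    by rewrite kron_mul mulmx1.
  by rewrite e -mulmxA hi mulmxA -hg.
case=> h' [h1' h2' h3']; exists h'; split => //; exact: IH.
Qed.

Definition Pm (e : ext (kmod k r) (kmod k r)) : Prop :=
  exists h : 'M[k]_(adim (e_first e) * n),
    [/\ @is_hom k r (tmod G (e_first e) M) (tmod L (e_first e) M) h,
        kron (e_inj e) (1%:M : 'M[k]_n) *m h = kron (e_inj e) 1%:M &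
        @chain_morph k r M _ (tchain G M (e_rest e)) (tmod L (e_first e) M) h (tchain L M (e_rest e))].

Lemma Pm_zeta i : Pm (zeta k p i).
Proof. exists (hh i); split; [exact: hh_hom | exact: hh_inj | exact: hh_chain]. Qed.

Lemma Pm_splice e i : Pm e -> Pm (splice e (zeta k p i)).
Proof.
case=> h [h1 h2 h3]; exists h; split => //=.
apply: splice_morph => //; [exact: hh_inj | exact: hh_hom | exact: hh_chain].
Qed.

Lemma Pm_monomial i0 s : Pm (zeta_monomial k p i0 s).
Proof.
rewrite /zeta_monomial; elim: s (zeta k p i0) (Pm_zeta i0) => //= i s IH e he.
by apply: IH; apply: Pm_splice.
Qed.

Lemma morph_theta e : Pm e -> ext_morph (Theta G M e) (Theta L M e).
Proof.
case=> h [h1 h2 h3]; exists h; split => //=.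
by rewrite -castmx_mull h2.
Qed.

Lemma Gr_props : forall X : amod k r, is_mod p X -> is_mod p (tmod G X M).
Proof.
move=> X [hX1 hX2]; split => [j1 j2 | j] /=.
  by apply: Gr_comm; [exact: hX1 | exact: hM.1].
exact: (Gr_nil hp hchar (hX2 j) (hM.2 j)).
Qed.

Lemma Lie_props : forall X : amod k r, is_mod p X -> is_mod p (tmod L X M).
Proof.
move=> X [hX1 hX2]; split => [j1 j2 | j] /=.
  by apply: Lie_comm; [exact: hX1 | exact: hM.1].
exact: (Lie_nil hp hchar (hX2 j) (hM.2 j)).
Qed.

Lemma main_step i0 s :
  yoneda_step p (Theta G M (zeta_monomial k p i0 s)) (Theta L M (zeta_monomial k p i0 s)).
Proof.
split.
- apply: theta_ext_exact => //; [exact: Gr_props | exact: Gr_hom | exact: Gr_k | exact: monomial_exact].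
- apply: theta_ext_exact => //; [exact: Lie_props | exact: Lie_hom | exact: Lie_k | exact: monomial_exact].
- exact: morph_theta (Pm_monomial i0 s).
Qed.
End Morph.


Unset Implicit Arguments.

Theorem theorem4p3 (k : fieldType) (p r : nat) (hp : prime p)
    (hchar : p \in [pchar k]) (M : amod k r) (hM : is_mod p M)
    (i0 : 'I_r) (s : seq 'I_r) :
  yoneda_eq p (Theta (@delta_Gr k) M (zeta_monomial k p i0 s))
              (Theta (@delta_Lie k) M (zeta_monomial k p i0 s)).
Proof.
move: hp hchar M hM i0 s; case: p => [|p'] hp hchar M hM i0 s; first by [].
apply: Relation_Operators.rst_step; exact: main_step.
Qed.
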